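(* Let $p$ be an odd prime and $q=p^r$ with $r\ge1$. Let $k\in(\mathbb{Z}/q\mathbb{Z})^\times$ and let $\theta_k:(\mathbb{Z}/q\mathbb{Z})^\times\to(\mathbb{Z}/q\mathbb{Z})^\times$ be multiplication by $k$, $\theta_k(u)=ku$. Let $f:(\mathbb{Z}/q\mathbb{Z})^\times\to\mathbb{R}$ be a function that is monotonic on $[1,q]_\mathbb{Z}$. Then the following are equivalent: (i) $f\circ\theta_k=f$; (ii) $k=1$ or $f$ is constant.
   Context: $[a,b]_\mathbb{Z}$ denotes the set of integers in the closed interval $[a,b]$ not divisible by $p$; $[1,q]_\mathbb{Z}$ is used as the set of representatives of $(\mathbb{Z}/q\mathbb{Z})^\times$, and ''$f$ monotonic on $[1,q]_\mathbb{Z}$'' means that $i\mapsto f(i\bmod q)$ is monotonic on this set of integers ordered as usual. *)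

(* Defs.v *)
From mathcomp Require Import all_boot all_order all_algebra all_fingroup.
From mathcomp Require Import reals.
Set Implicit Arguments. Unset Strict Implicit. Unset Printing Implicit Defensive.
Import Order.TTheory GRing.Theory Num.Theory.

(* For q > 1 the set [1,q]_Z of integers in [1,q]
   not divisible by p (q = p^r) is in order-preserving bijection with the
   units via u |-> val (val u) (the representative in [0, q-1]; units are
   never 0 and q itself is excluded since p | q). *)
Definition unit_rep (q : nat) (u : {unit 'Z_q}) : nat := val (val u).

Definition monotonic_units (R : realType) (q : nat)
    (f : {unit 'Z_q} -> R) : Prop :=
  (forall u v : {unit 'Z_q}, (unit_rep u <= unit_rep v)%N -> (f u <= f v)%R) \/
  (forall u v : {unit 'Z_q}, (unit_rep u <= unit_rep v)%N -> (f v <= f u)%R).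

(* Main.v *)
Require Import Defs.
From mathcomp Require Import all_boot all_order all_algebra all_fingroup zify.
From mathcomp Require Import reals.
Import Order.TTheory GRing.Theory Num.Theory.
Set Implicit Arguments. Unset Strict Implicit.

Section U.
Variable q : nat.
Hypothesis hq : 1 < q.

Lemma rep_lt (u : {unit 'Z_q}) : unit_rep u < q.
Proof. apply: (leq_trans (ltn_ord (val u))); by rewrite Zp_cast. Qed.

Lemma rep_mul (u v : {unit 'Z_q}) : unit_rep (u * v)%g = (unit_rep u * unit_rep v) %% q.
Proof. by rewrite /unit_rep /=; congr (_ %% _); exact: Zp_cast. Qed.

Lemma rep_inj (u v : {unit 'Z_q}) : unit_rep u = unit_rep v -> u = v.
Proof. by move=> h; apply: val_inj; apply: val_inj. Qed.

Lemma rep_cop (u : {unit 'Z_q}) : coprime q (unit_rep u).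
Proof.
have h : ((unit_rep u)%:R%R : 'Z_q) \is a GRing.unit by rewrite /unit_rep natr_Zp; exact: (valP u).
by move: h; rewrite unitZpE.
Qed.

Lemma rep_ex y : y < q -> coprime q y -> exists u : {unit 'Z_q}, unit_rep u = y.
Proof.
move=> yq cy.
have U : (y%:R%R : 'Z_q) \is a GRing.unit by rewrite unitZpE.
exists (FinRing.Unit U); rewrite /unit_rep /= val_Zp_nat // modn_small //.
Qed.

Lemma rep1 : unit_rep (1%g : {unit 'Z_q}) = 1.
Proof. rewrite /unit_rep /=; have -> : (Zp_trunc q).+2 = q by exact: Zp_cast. by rewrite modn_small. Qed.

Lemma rep_pos (u : {unit 'Z_q}) : 0 < unit_rep u.
Proof.
have := rep_cop u; case: (unit_rep u) => //; rewrite /coprime gcdn0 => /eqP; lia.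
Qed.

Lemma m1_ex : exists m1 : {unit 'Z_q}, unit_rep m1 = q - 1.
Proof.
apply: rep_ex; first lia.
by have := coprimenP (ltnW hq); rewrite subn1.
Qed.

Lemma rep_neg (m1 u : {unit 'Z_q}) : unit_rep m1 = q - 1 ->
  unit_rep (m1 * u)%g = q - unit_rep u.
Proof.
move=> hm; rewrite rep_mul hm.
have := rep_pos u; have := rep_lt u; set y := unit_rep u => h1 h2.
rewrite (_ : (q - 1) * y = (y - 1) * q + (q - y)); last by nia.
by rewrite modnMDl modn_small //; lia.
Qed.

Lemma mulC (u v : {unit 'Z_q}) : (u * v = v * u)%g.
Proof. by apply: val_inj; rewrite /= mulrC. Qed.
End U.
Lemma core_nat (p q a : nat) (P : nat -> Prop) : 2 < p -> 2 <= a -> a < q -> P 1 ->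
  (forall y, P y -> P (a * y %% q)) ->
  (forall y y', P y -> 0 < y' -> y' <= y -> ~~ (p %| y') -> P y') ->
  (forall y, P y -> 2 * y < q) -> False.
Proof.
move=> p3 a2 aq P1 Pmul Pdown Pb.
pose S y := [/\ 0 < y, ~~ (p %| y), a * y < q & P (a * y)].
have step : forall y, S y -> exists y', S y' /\ y < y'.
  move=> y [y0 py ayq Pay].
  have bnd := Pb _ Pay.
  case: (boolP (p %| y.+1)) => hp1.
  - have hp2 : ~~ (p %| y.+2).
      apply/negP; rewrite -[y.+2]addn1 (dvdn_addr _ hp1) => /dvdn_leq h.
      by have := h isT; lia.
    have y2 : 2 <= y by have := dvdn_leq (ltn0Sn _) hp1; lia.
    have ay2 : a * y.+2 < q by nia.
    have Py2 : P y.+2 by apply: (Pdown (a * y)) => //; nia.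
    exists y.+2; split=> //; split=> //.
    by have := Pmul _ Py2; rewrite modn_small.
  - have ay1 : a * y.+1 < q by nia.
    have Py1 : P y.+1 by apply: (Pdown (a * y)) => //; nia.
    exists y.+1; split=> //; split=> //.
    by have := Pmul _ Py1; rewrite modn_small.
have all : forall n, exists y, S y /\ n <= y.
  elim=> [|n [y [Sy ny]]].
  - exists 1; split=> //; split=> //; first by rewrite dvdn1; lia.
      by rewrite muln1.
    by rewrite muln1; have := Pmul _ P1; rewrite muln1 modn_small.
  - have [y' [Sy' yy']] := step _ Sy; exists y'; split=> //; lia.
have [y [[_ _ ayq _] qy]] := all q.
nia.
Qed.

Section Main.
Variable R : realType.
Variables (p q : nat).
Hypotheses (p3 : 2 < p) (hq : 1 < q) (hcop : forall m, coprime q m = ~~ (p %| m)).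
Variable k : {unit 'Z_q}.
Hypothesis k1 : k <> 1%g.

Lemma core_f (f : {unit 'Z_q} -> R) (c : R) :
  (forall u v, unit_rep u <= unit_rep v -> (f u <= f v)%R) ->
  (forall u, f (k * u)%g = f u) ->
  (f 1%g < c)%R -> (forall u, q <= 2 * unit_rep u -> (c <= f u)%R) -> False.
Proof.
move=> mono inv f1 fc.
apply: (@core_nat p q (unit_rep k) (fun y => exists u, unit_rep u = y /\ (f u < c)%R)) => //.
- have := rep_pos hq k; case: (ltngtP (unit_rep k) 1) => h pos //.
  by exfalso; apply: k1; apply: rep_inj; rewrite h rep1.
- exact: rep_lt hq k.
- by exists 1%g; rewrite rep1.
- move=> y [u [<- fu]]; exists (k * u)%g; by rewrite rep_mul // inv.
- move=> y y' [u [yu fu]] y0 yy pn.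
  have [u' hu'] : exists u' : {unit 'Z_q}, unit_rep u' = y'.
    apply: rep_ex => //; last by rewrite hcop.
    have := rep_lt hq u; lia.
  exists u'; split=> //; apply: le_lt_trans fu; apply: mono; lia.
- move=> y [u [yu fu]]; rewrite ltnNge; apply/negP => h.
  have := fc u; rewrite yu => /(_ h) h2.
  by move: (lt_le_trans fu h2); rewrite ltxx.
Qed.
End Main.

Lemma nondec_main (R : realType) (p q : nat) (k : {unit 'Z_q}) (f : {unit 'Z_q} -> R) :
  2 < p -> 1 < q -> odd q -> p %| q -> (forall m, coprime q m = ~~ (p %| m)) ->
  (forall u v, unit_rep u <= unit_rep v -> (f u <= f v)%R) ->
  (forall u, f (k * u)%g = f u) ->
  k = 1%g \/ forall u v, f u = f v.
Proof.
move=> p3 hq oq pq hcop mono inv.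
set m := q./2.
have qm : q = m.*2.+1 by rewrite /m -[LHS]odd_double_half oq.
have [h ehm] : exists h : {unit 'Z_q}, unit_rep h = m.
  apply: rep_ex => //; first lia.
  rewrite hcop; apply/negP => hd; move: pq; rewrite qm -addn1 dvdn_addr.
    by move/dvdn_leq => h2; have := h2 isT; lia.
  by rewrite -muln2; apply: dvdn_mulr.
have [h' eh'm] : exists h : {unit 'Z_q}, unit_rep h = m.+1.
  apply: rep_ex => //; first lia.
  rewrite hcop; apply/negP => hd.
  have : p %| q + 1 by rewrite (_ : q + 1 = m.+1 * 2); [apply: dvdn_mulr | lia].
  by rewrite (dvdn_addr _ pq) => /dvdn_leq h2; have := h2 isT; lia.
have [m1 em1] := m1_ex hq.
have lo u : (f 1%g <= f u)%R by apply: mono; rewrite rep1 // rep_pos.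
have hi u : (f u <= f m1)%R by apply: mono; rewrite em1; have := rep_lt hq u; lia.
case: (boolP (k == 1%g)) => [/eqP|/eqP k1]; first by left.
have [c1|c1] := ltP (f 1%g) (f h').
  exfalso; apply: (core_f p3 hq hcop k1 mono inv c1) => u hu.
  by apply: mono; lia.
have [c2|c2] := ltP (f h) (f m1).
  exfalso.
  pose g u := (- f (m1 * u)%g)%R.
  apply: (@core_f R p q p3 hq hcop k k1 g (- f h)%R).
  - move=> u v huv; rewrite /g lerN2; apply: mono.
    rewrite !(rep_neg hq) //; have := rep_lt hq u; have := rep_lt hq v; lia.
  - move=> u; rewrite /g mulgA (mulC m1 k) -mulgA inv //.
  - by rewrite /g mulg1 ltrN2.
  - move=> u hu; rewrite /g lerN2; apply: mono; rewrite (rep_neg hq) //; lia.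
right=> u v.
have e u' : f u' = f 1%g.
  apply/eqP; rewrite eq_le lo andbT; apply: (le_trans (hi u')).
  apply: (le_trans c2); apply: le_trans c1; apply: mono; lia.
by rewrite !e.
Qed.

Theorem lemma4p2 (R : realType) (p r : nat) (hp : prime p) (hodd : odd p)
    (hr : (1 <= r)%N) (k : {unit 'Z_(p ^ r)}) (f : {unit 'Z_(p ^ r)} -> R)
    (hf : monotonic_units f) :
  (forall u : {unit 'Z_(p ^ r)}, f (k * u)%g = f u) <->
  (k = 1%g \/ forall u v : {unit 'Z_(p ^ r)}, f u = f v).
Proof.
have p2 := prime_gt1 hp.
have p3 : 2 < p by move: hodd p2; case: (ltngtP p 2) => // ->.
have hq : 1 < p ^ r.
  by apply: (leq_trans p2); rewrite -{1}(expn1 p) leq_pexp2l // ltnW.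
have oq : odd (p ^ r) by rewrite oddX hodd orbT.
have pq : p %| p ^ r by rewrite -{1}(expn1 p) dvdn_exp2l.
have hcop m : coprime (p ^ r) m = ~~ (p %| m) by rewrite coprime_pexpl // prime_coprime.
split.
- move=> inv; case: hf => mono.
  + exact: (nondec_main p3 hq oq pq hcop mono inv).
  + have [->|c] : k = 1%g \/ forall u v, (- f u = - f v :> R)%R.
      * apply: (@nondec_main R p (p ^ r) k (fun u => - f u)%R p3 hq oq pq hcop).
          by move=> u v huv; rewrite lerN2; apply: mono.
        by move=> u; rewrite inv.
      * by left.
      * by right=> u v; apply: oppr_inj; apply: c.
- case=> [->|c] u; first by rewrite mul1g.
  exact: c.
Qed.
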